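(* Let $\mathbf{X}$ be a finite induced subtournament of $\mathbf{S}(2)$. Then $\mathbf{X}$ has exactly $2|\mathbf{X}|/|\mathrm{Aut}(\mathbf{X})|$ pairwise nonisomorphic extensions in $\mathcal{P}_2$.
   Context: $\mathbf{S}(2)$ is the tournament whose vertices are the points of the unit circle of $\mathbb{C}$ with rational argument, with an arc from $x$ to $y$ iff $0<\arg(y/x)<\pi$. $\mathcal{P}_2$ is the class of finite structures $\mathbf{A}=(A,<^{\mathbf{A}},P_1^{\mathbf{A}},P_2^{\mathbf{A}})$ with $<^{\mathbf{A}}$ a linear order and $(P_1^{\mathbf{A}},P_2^{\mathbf{A}})$ a partition of $A$; isomorphisms are order-preserving bijections preserving $P_1$ and $P_2$. Writing $a\sim b$ when $a,b$ lie in the same part, $p(\mathbf{A})$ is the tournament on $A$ with an arc from $a$ to $b$ iff either ($a\sim b$ and $a<^{\mathbf{A}}b$) or ($a\not\sim b$ and $b<^{\mathbf{A}}a$). An extension of a tournament $\mathbf{X}$ is any $\mathbf{A}$ with $p(\mathbf{A})=\mathbf{X}$. $\mathrm{Aut}(\mathbf{X})$ is the automorphism group of $\mathbf{X}$. *)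

(* Defs.v *)
From HB Require Import structures.
From mathcomp Require Import all_boot all_order all_algebra all_fingroup.
From mathcomp Require Import all_classical all_reals all_analysis.
Set Implicit Arguments. Unset Strict Implicit. Unset Printing Implicit Defensive.
Import Order.TTheory GRing.Theory Num.Theory.
Local Open Scope ring_scope.

(* Vertices of S(2): the points e^{i q} with q rational (radians); distinct
   rationals give distinct points since pi is irrational, so S(2) is indexed
   by rat.  Arc from e^{iq} to e^{ir} iff 0 < arg(e^{i(r-q)}) < pi, i.e. iff
   some representative r - q + 2 k pi of the argument lies in (0, pi). *)
Definition S2_arc (R : realType) (q r : rat) : Prop :=
  exists k : int, 0 < ratr r - ratr q + k%:~R * (2 * (pi : R)) < (pi : R).

(* A finite induced subtournament X of S(2), given by an injective labelling
   v : 'I_n -> rat of its vertices; its arc relation: *)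
Definition X_arc (R : realType) (n : nat) (v : 'I_n -> rat) (a b : 'I_n) : Prop :=
  S2_arc R (v a) (v b).

Definition AutX (R : realType) (n : nat) (v : 'I_n -> rat) : {set {perm 'I_n}} :=
  [set s : {perm 'I_n} | `[< forall a b, X_arc R v a b <-> X_arc R v (s a) (s b) >]].

(* Structures in P_2 on the vertex set 'I_n: a strict order relation
   (lt a b = "a < b") and a part indicator (true = P_1, false = P_2). *)
Definition P2struct (n : nat) : finType :=
  ({ffun 'I_n -> {ffun 'I_n -> bool}} * {ffun 'I_n -> bool})%type.

Definition P2lt n (A : P2struct n) (a b : 'I_n) : bool := A.1 a b.
Definition P2part n (A : P2struct n) (a : 'I_n) : bool := A.2 a.

Definition is_linear_order n (lt : 'I_n -> 'I_n -> bool) : Prop :=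
  [/\ (forall a, ~~ lt a a),
      (forall a b c, lt a b -> lt b c -> lt a c)
    & (forall a b, a != b -> lt a b || lt b a)].

Definition is_P2 n (A : P2struct n) : Prop := is_linear_order (P2lt A).

Definition p_arc n (A : P2struct n) (a b : 'I_n) : bool :=
  ((P2part A a == P2part A b) && P2lt A a b)
  || ((P2part A a != P2part A b) && P2lt A b a).

Definition is_extension (R : realType) n (v : 'I_n -> rat) (A : P2struct n) : Prop :=
  is_P2 A /\ forall a b, p_arc A a b <-> X_arc R v a b.

Definition P2iso n (A B : P2struct n) : Prop :=
  exists f : {perm 'I_n},
    (forall a b, P2lt B (f a) (f b) = P2lt A a b) /\
    (forall a, P2part B (f a) = P2part A a).

(* Main.v *)
Require Import Defs.
From HB Require Import structures.
From mathcomp Require Import all_boot all_order all_algebra all_fingroup.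
From mathcomp Require Import all_classical all_reals all_analysis.
From mathcomp Require Import zify ring lra.
Import Order.TTheory GRing.Theory Num.Theory.
Local Open Scope ring_scope.
Set Implicit Arguments. Unset Strict Implicit. Unset Printing Implicit Defensive.

Lemma pi_neq0 (R : realType) : (pi : R) != 0.
Proof. by rewrite gt_eqF // pi_gt0. Qed.

Lemma noint (R : realType) (q : rat) (c : int) : (ratr q : R) = pi * c%:~R -> c = 0.
Proof.
move=> H; apply/eqP; apply/negPn/negP => c0.
apply: (@pi_irrationnal R); exists (q / c%:~R) => //.
have c0' : (c%:~R : R) != 0 by rewrite intr_eq0.
have -> : (ratr (q / c%:~R) : R) = ratr q / ratr c%:~R by rewrite fmorph_div.
by rewrite ratr_int H mulfK.
Qed.

Lemma ratr_inj' (R : realType) (q r : rat) : (ratr q : R) = ratr r -> q = r.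
Proof. exact: (fmorph_inj (@ratr R)). Qed.

Definition uu (R : realType) n (v : 'I_n -> rat) m x : R := (ratr (v x) - ratr (v m)) / pi.
Definition gg (R : realType) n (v : 'I_n -> rat) m x : int := Num.floor (uu R v m x / 2).
Definition rr (R : realType) n (v : 'I_n -> rat) m x : R := uu R v m x - 2 * (gg R v m x)%:~R.
Definition pp (R : realType) n (v : 'I_n -> rat) m x : R :=
  if rr R v m x < 1 then rr R v m x else rr R v m x - 1.

Lemma rr_bnd (R : realType) n (v : 'I_n -> rat) m x : 0 <= rr R v m x < 2.
Proof.
rewrite /rr /gg; have := Num.Theory.floor_itv (uu R v m x / 2).
rewrite intrD /=; set f := (Num.floor _)%:~R; set u := uu R v m x.
move=> /andP [h1 h2]; apply/andP; split; lra.
Qed.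

Lemma th_eq (R : realType) n (v : 'I_n -> rat) m x :
  (ratr (v x) : R) = ratr (v m) + pi * (rr R v m x + 2 * (gg R v m x)%:~R).
Proof.
rewrite /rr subrK /uu mulrC divfK ?pi_neq0 //; lra.
Qed.

Lemma arc_rr (R : realType) n (v : 'I_n -> rat) m x y :
  X_arc R v x y <-> (0 < rr R v m y - rr R v m x < 1) \/ (rr R v m y - rr R v m x < -1).
Proof.
rewrite /X_arc /S2_arc (th_eq R v m x) (th_eq R v m y).
have := rr_bnd R v m x; have := rr_bnd R v m y.
set rx := rr R v m x; set ry := rr R v m y; set gx := gg R v m x; set gy := gg R v m y.
move=> /andP[hy1 hy2] /andP[hx1 hx2].
have pi0 := @pi_gt0 R.
have E : forall k : int, ratr (v m) + pi * (ry + 2 * gy%:~R) -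
     (ratr (v m) + pi * (rx + 2 * gx%:~R)) + k%:~R * (2 * pi) =
     pi * (ry - rx + 2 * (gy - gx + k)%:~R).
  by move=> k; rewrite !intrD intrN; ring.
split.
  move=> [k]; rewrite E pmulr_rgt0 // gtr_pMr //.
  set j := gy - gx + k; move=> /andP[h1 h2].
  have j1 : (-1 < j)%R by rewrite -(ltr_int R); rewrite intrN /=; lra.
  have j2 : (j < 2)%R by rewrite -(ltr_int R); lra.
  have : j = 0 \/ j = 1 by lia.
  case=> Hj; rewrite Hj ?mulr0 ?addr0 ?mulr1 in h1 h2.
    by left; apply/andP; split.
  by right; lra.
case=> [/andP[h1 h2]|h].
  exists (gx - gy); rewrite E.
  have -> : gy - gx + (gx - gy) = 0 by ring.
  by rewrite mulr0 addr0 pmulr_rgt0 // gtr_pMr // h1 h2.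
exists (gx - gy + 1); rewrite E; apply/andP; split.
  rewrite pmulr_rgt0 //.
  have -> : gy - gx + (gx - gy + 1) = 1 by ring.
  lra.
rewrite gtr_pMr //.
have -> : gy - gx + (gx - gy + 1) = 1 by ring.
lra.
Qed.

Lemma pp_inj (R : realType) n (v : 'I_n -> rat) m x y : injective v ->
  pp R v m x = pp R v m y -> x = y.
Proof.
move=> vinj Hp.
have key : forall e : int, rr R v m x - rr R v m y = e%:~R -> x = y.
  move=> e He; apply: vinj; apply: (@ratr_inj' R); apply/eqP; rewrite -subr_eq0.
  have E : (ratr (v x - v y) : R) = pi * (e + 2 * (gg R v m x - gg R v m y))%:~R.
    rewrite rmorphB /= (th_eq R v m x) (th_eq R v m y) !intrD !intrM !intrD !intrN -He /=.
    ring.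
  have c0 := noint E; rewrite c0 mulr0 in E.
  by rewrite -rmorphB /= E.
move: Hp; rewrite /pp; case: ifP => hx; case: ifP => hy => H.
- by apply: (key 0); lra.
- by apply: (key (-1)); lra.
- by apply: (key 1); lra.
- by apply: (key 0); lra.
Qed.

Definition Psi (R : realType) n (v : 'I_n -> rat) (mb : 'I_n * bool) : P2struct n :=
  ([ffun x => [ffun y => pp R v mb.1 x < pp R v mb.1 y]],
   [ffun x => (rr R v mb.1 x < 1) == mb.2]).

Lemma Psi_lt (R : realType) n (v : 'I_n -> rat) mb x y :
  P2lt (Psi R v mb) x y = (pp R v mb.1 x < pp R v mb.1 y).
Proof. by rewrite /P2lt /Psi /= !ffunE. Qed.

Lemma Psi_part (R : realType) n (v : 'I_n -> rat) mb x :
  P2part (Psi R v mb) x = ((rr R v mb.1 x < 1) == mb.2).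
Proof. by rewrite /P2part /Psi /= !ffunE. Qed.

Lemma Psi_ext (R : realType) n (v : 'I_n -> rat) mb : injective v ->
  is_extension R v (Psi R v mb).
Proof.
move=> vinj; case: mb => m b; split.
  split => [a|a b' c|a b'].
  - by rewrite Psi_lt ltxx.
  - by rewrite !Psi_lt; apply: lt_trans.
  - move=> H; rewrite !Psi_lt; case: (ltgtP (pp R v m a) (pp R v m b')) => //.
    by move/(pp_inj vinj)=> E; rewrite E eqxx in H.
move=> x y; rewrite (arc_rr R v m x y) /p_arc !Psi_part !Psi_lt /pp /=.
have := rr_bnd R v m x; have := rr_bnd R v m y.
set rx := rr R v m x; set ry := rr R v m y.
move=> /andP[hy1 hy2] /andP[hx1 hx2].
case: (ltP rx 1) => hx; case: (ltP ry 1) => hy; case: b;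
  split => [/orP[/andP[e h]|/andP[e h]]|[/andP[h1 h2]|h]]; try simpl in e;
  try (by []); try (by left; apply/andP; split; lra); try (by right; lra);
  try (by exfalso; lra); rewrite /= ?orbF; lra.
Qed.

Lemma rr_m (R : realType) n (v : 'I_n -> rat) m : rr R v m m = 0.
Proof.
by rewrite /rr /gg /uu subrr mul0r mul0r Num.Theory.floor0 mulr0 subr0.
Qed.

Lemma Psi_min (R : realType) n (v : 'I_n -> rat) mb x : injective v ->
  x != mb.1 -> P2lt (Psi R v mb) mb.1 x.
Proof.
move=> vinj Hx; rewrite Psi_lt.
have E : pp R v mb.1 mb.1 = 0 by rewrite /pp rr_m ltr01.
have := rr_bnd R v mb.1 x => /andP[h1 h2].
have ge : 0 <= pp R v mb.1 x by rewrite /pp; case: ifP => h; lra.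
rewrite E lt_neqAle ge andbT eq_sym; apply/negP => /eqP H.
by move: Hx; rewrite -E in H; rewrite (pp_inj vinj H) eqxx.
Qed.

Lemma Psi_partm (R : realType) n (v : 'I_n -> rat) mb :
  P2part (Psi R v mb) mb.1 = mb.2.
Proof. by rewrite Psi_part rr_m ltr01; case: mb.2. Qed.
Definition act n (s : {perm 'I_n}) (A : P2struct n) : P2struct n :=
  ([ffun x => [ffun y => A.1 (s^-1%g x) (s^-1%g y)]], [ffun x => A.2 (s^-1%g x)]).

Lemma act_lt n s (A : P2struct n) a b : P2lt (act s A) (s a) (s b) = P2lt A a b.
Proof. by rewrite /P2lt /act /= !ffunE !permK. Qed.

Lemma act_part n s (A : P2struct n) a : P2part (act s A) (s a) = P2part A a.
Proof. by rewrite /P2part /act /= !ffunE !permK. Qed.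

Lemma act_parc n s (A : P2struct n) a b : p_arc (act s A) (s a) (s b) = p_arc A a b.
Proof. by rewrite /p_arc !act_lt !act_part. Qed.

Lemma P2structP n (A B : P2struct n) :
  (forall a b, P2lt A a b = P2lt B a b) -> (forall a, P2part A a = P2part B a) -> A = B.
Proof.
case: A => A1 A2; case: B => B1 B2 /= Hl Hp.
congr pair; apply/ffunP => x; first apply/ffunP => y; [exact: Hl | exact: Hp].
Qed.

Lemma iso_act n (A B : P2struct n) : P2iso A B <-> exists f, B = act f A.
Proof.
split.
  move=> [f [Hl Hp]]; exists f; apply: P2structP => [a b|a].
    by rewrite -{1}(permKV f a) -{1}(permKV f b) Hl /P2lt /act /= !ffunE.
  by rewrite -{1}(permKV f a) Hp /P2part /act /= !ffunE.
move=> [f ->]; exists f; split => [a b|a]; [exact: act_lt | exact: act_part].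
Qed.

Lemma iso_refl n (A : P2struct n) : P2iso A A.
Proof. by exists 1%g; split => [a b|a]; rewrite !perm1. Qed.

Lemma iso_sym n (A B : P2struct n) : P2iso A B -> P2iso B A.
Proof.
move=> [f [Hl Hp]]; exists f^-1%g; split => [a b|a].
  by rewrite -Hl !permKV.
by rewrite -Hp permKV.
Qed.

Lemma iso_trans n (A B C : P2struct n) : P2iso A B -> P2iso B C -> P2iso A C.
Proof.
move=> [f [Hl Hp]] [g [Hl' Hp']]; exists (f * g)%g; split => [a b|a].
  by rewrite !permM Hl' Hl.
by rewrite permM Hp' Hp.
Qed.

Definition cnt n (A : P2struct n) a := #|[set y | P2lt A y a]|.

Lemma cnt_lt n (A : P2struct n) a b : is_P2 A -> P2lt A a b -> (cnt A a < cnt A b)%N.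
Proof.
move=> [Hirr Htr Htot] Hab; apply: proper_card; apply/properP; split.

  by apply/fintype.subsetP => y; rewrite !inE => Hy; apply: Htr Hab.
by exists a; rewrite !inE ?Hab ?Hirr.
Qed.

Lemma cnt_inj n (A : P2struct n) a b : is_P2 A -> cnt A a = cnt A b -> a = b.
Proof.
move=> HA Hc; apply/eqP; apply/negPn/negP => Hne.
have [_ _ Htot] := HA.
case/orP: (Htot _ _ Hne) => /(cnt_lt HA); rewrite Hc ltnn //.
Qed.

Lemma ext_min n (A : P2struct n) : is_P2 A -> (0 < n)%N ->
  exists m, forall x, x != m -> P2lt A m x.
Proof.
move=> HA n0.
case: (@arg_minnP _ (Ordinal n0) xpredT (cnt A) isT) => m _ Hm.
exists m => x Hx; have [_ _ Htot] := HA.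
case/orP: (Htot _ _ Hx) => // /(cnt_lt HA).
by rewrite ltnNge Hm.
Qed.

Lemma parc_eq R n (v : 'I_n -> rat) (A B : P2struct n) :
  is_extension R v A -> is_extension R v B -> forall a b, p_arc A a b = p_arc B a b.
Proof.
move=> [_ HA] [_ HB] a b; apply/idP/idP => H.
  by apply/HB/HA.
by apply/HA/HB.
Qed.

Lemma ext_det R n (v : 'I_n -> rat) (A B : P2struct n) m :
  is_extension R v A -> is_extension R v B ->
  (forall x, x != m -> P2lt A m x) -> (forall x, x != m -> P2lt B m x) ->
  P2part A m = P2part B m -> A = B.
Proof.
move=> eA eB mA mB pm.
have He := parc_eq eA eB.
have [[Ai At Ato] _] := eA; have [[Bi Bt Bto] _] := eB.
have Hp : forall x, P2part A x = P2part B x.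
  move=> x; have [->|Hx] := eqVneq x m; first exact: pm.
  have := He m x; rewrite /p_arc mA // mB //.
  have nA : P2lt A x m = false by apply/negP => H; have := Ai m; rewrite (At _ _ _ (mA _ Hx) H).
  have nB : P2lt B x m = false by apply/negP => H; have := Bi m; rewrite (Bt _ _ _ (mB _ Hx) H).
  rewrite nA nB !andbT !andbF !orbF pm.
  by case: (P2part A x); case: (P2part B m); case: (P2part B x).
apply: P2structP => //= a b.
have [->|Hab] := eqVneq a b.
  by rewrite (negbTE (Ai b)) (negbTE (Bi b)).
case E: (P2part A a == P2part A b).
  have := He a b; rewrite /p_arc -!Hp E /=.
  by rewrite !orbF.
have := He b a; rewrite /p_arc -!Hp eq_sym E /=.
done.
Qed.

Lemma rigid n (A : P2struct n) (s t : {perm 'I_n}) : is_P2 A -> act s A = act t A -> s = t.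
Proof.
move=> HA Hst.
have Hinv : forall a b, P2lt A a b = P2lt A (t^-1%g (s a)) (t^-1%g (s b)).
  move=> a b; rewrite -(act_lt s A a b) Hst -(act_lt t A (t^-1%g (s a))) !permKV //.
apply/permP => a.
have : cnt A (t^-1%g (s a)) = cnt A a.
  rewrite /cnt -(card_preimset _ (f := fun y => t^-1%g (s y))); last first.
    by move=> x y /perm_inj /perm_inj.
  have -> // : (fun y => t^-1%g (s y)) @^-1: [set y | P2lt A y (t^-1%g (s a))] = [set y | P2lt A y a].
  by apply/setP => y; rewrite !inE -Hinv.
move/(cnt_inj HA) => H.
by rewrite -{2}H permKV.
Qed.

Lemma act_lt' n s (A : P2struct n) x y : P2lt (act s A) x y = P2lt A (s^-1%g x) (s^-1%g y).
Proof. by rewrite /P2lt /act /= !ffunE. Qed.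

Lemma act_ext (R : realType) n (v : 'I_n -> rat) (A : P2struct n) s :
  is_extension R v A -> s \in AutX R v -> is_extension R v (act s A).
Proof.
move=> [[Ai At Ato] HA]; rewrite inE => /asboolP Hs; split.
  split => [a|a b c|a b].
  - by rewrite act_lt'.
  - rewrite !act_lt'; exact: At.
  - by move=> H; rewrite !act_lt'; apply: Ato; rewrite (inj_eq (@perm_inj _ _)).
move=> x y; rewrite -{1}(permKV s x) -{1}(permKV s y) act_parc HA Hs !permKV.
done.
Qed.

Lemma aut_of (R : realType) n (v : 'I_n -> rat) (A : P2struct n) s :
  is_extension R v A -> is_extension R v (act s A) -> s \in AutX R v.
Proof.
move=> [_ HA] [_ HB]; rewrite inE; apply/asboolP => a b.
by rewrite -HA -HB act_parc.
Qed.

Theorem lemma2 (R : realType) (n : nat) (v : 'I_n -> rat) :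
  injective v -> (0 < n)%N ->
  exists S : {set P2struct n},
    [/\ (forall A, A \in S -> is_extension R v A),
        (forall A B, A \in S -> B \in S -> P2iso A B -> A = B),
        (forall A, is_extension R v A -> exists2 B, B \in S & P2iso A B)
      & (#|S|%:R : rat) = (2 * n)%:R / (#|AutX R v|)%:R].
Proof.
move=> vinj n0.
pose E := [set A : P2struct n | `[< is_extension R v A >]].
have HE : E = [set Psi R v mb | mb : 'I_n * bool].
  apply/setP => A; rewrite inE; apply/idP/imsetP.
    move=> /asboolP eA; have [m Hm] := ext_min eA.1 n0.
    exists (m, P2part A m) => //.
    apply: (ext_det eA (Psi_ext R (m, P2part A m) vinj) Hm) => [x Hx|].

      exact: (@Psi_min R n v (m, P2part A m) x vinj Hx).
    by rewrite (Psi_partm R v (m, P2part A m)).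
  by move=> [mb _ ->]; apply/asboolP; apply: Psi_ext.
have cardE : #|E| = (n * 2)%N.
  rewrite HE card_imset; first by rewrite card_prod card_ord card_bool.
  move=> [m b] [m' b'] H.
  have [Em|Hm] := eqVneq m m'.
    subst m'; congr pair.
    by have := Psi_partm R v (m, b); rewrite H Psi_partm /=.
  have h1 := @Psi_min R n v (m, b) m' vinj; rewrite /= eq_sym Hm in h1.
  have h2 := @Psi_min R n v (m', b') m vinj; rewrite /= Hm in h2.
  have [[Ai At _] _] := Psi_ext R (m, b) vinj.
  rewrite -H in h2; have := Ai m; rewrite (At _ _ _ (h1 isT) (h2 isT)) //.
pose S := [set A : P2struct n | `[< is_extension R v A >] &&
   [forall B, `[< is_extension R v B /\ P2iso A B >] ==> (enum_rank A <= enum_rank B)%N]].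
have S_ext : forall A, A \in S -> is_extension R v A.
  by move=> A; rewrite inE => /andP[/asboolP H _].
have S_uniq : forall A B, A \in S -> B \in S -> P2iso A B -> A = B.
  move=> A B; rewrite !inE => /andP[/asboolP eA /forallP fA] /andP[/asboolP eB /forallP fB] iAB.
  have r1 : (enum_rank A <= enum_rank B)%N.
    by apply: (implyP (fA B)); apply/asboolP; split.
  have r2 : (enum_rank B <= enum_rank A)%N.
    by apply: (implyP (fB A)); apply/asboolP; split => //; apply: iso_sym.
  apply: enum_rank_inj; apply: ord_inj; apply/eqP; rewrite eqn_leq r1 r2.
  done.
have S_rep : forall A, is_extension R v A -> exists2 B, B \in S & P2iso A B.
  move=> A eA.
  have PA : `[< is_extension R v A /\ P2iso A A >] by apply/asboolP; split => //; apply: iso_refl.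
  case: (@arg_minnP _ A (fun B => `[< is_extension R v B /\ P2iso A B >]) (fun B => enum_rank B) PA).
  move=> B /asboolP [eB iAB] HB; exists B => //.
  rewrite inE; apply/andP; split; first by apply/asboolP.
  apply/forallP => C; apply/implyP => /asboolP [eC iBC]; apply: HB.
  by apply/asboolP; split => //; apply: iso_trans iAB iBC.
exists S; split => //.
pose Phi := fun p : P2struct n * {perm 'I_n} => act p.2 p.1.
have img : [set Phi p | p in finset.setX S (AutX R v)] = E.
  apply/setP => C; rewrite inE; apply/imsetP/idP.
    move=> [[A s]] /finset.setXP [/= /S_ext eA hs] ->.
    by apply/asboolP; apply: act_ext.
  move=> /asboolP eC; have [B HB iCB] := S_rep C eC.
  have [g Hg] := (iso_act B C).1 (iso_sym iCB).
  exists (B, g); last by [].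
  apply/finset.setXP; split => //; apply: (@aut_of R n v B g (S_ext _ HB)).
  by rewrite -Hg.
have inj : {in finset.setX S (AutX R v) &, injective Phi}.
  move=> [A s] [B t] /finset.setXP [HA _] /finset.setXP [HB _] H.
  have iA : P2iso A (act s A) by apply/iso_act; exists s.
  have iB : P2iso B (act t B) by apply/iso_act; exists t.
  have eAB : A = B.
    apply: S_uniq => //; apply: iso_trans iA _.
    rewrite /Phi /= in H; rewrite H; exact: iso_sym.
  subst B; congr pair.
  exact: (rigid (S_ext _ HA).1 H).
have cnt : (#|S| * #|AutX R v|)%N = (2 * n)%N.
  by rewrite -cardsX -(card_in_imset inj) img cardE mulnC.
have a0 : (0 < #|AutX R v|)%N.
  apply/card_gt0P; exists 1%g; rewrite inE; apply/asboolP => a b.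
  by rewrite !perm1.
by rewrite -cnt natrM mulfK // pnatr_eq0 -lt0n.
Qed.
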